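(* Let $((f_t),(g_t),(h_t))$ be a $W_{1,+}$-geodesic on $G$, let $x\in G$, $\gamma\in\mathrm{SE}\Gamma_{1,x}$ and $\tilde\gamma\in\mathrm{SE}\Gamma_{2,x}$. Then for all $t\in[0,1]$, $$f_t(x)=\frac{C_\gamma(t)\,C_{\tilde\gamma}(t)}{C_{\gamma\cup\tilde\gamma}},$$ where $\gamma\cup\tilde\gamma$ is the concatenation of $\gamma$ and $\tilde\gamma$ (an extremal path, for which $C_{\gamma\cup\tilde\gamma}(t)$ is constant).
   Context: $G$ is a connected, locally finite graph with graph distance $d$; geodesics are paths of adjacent vertices $\gamma(0),\dots,\gamma(n)$ with $n=d(\gamma(0),\gamma(n))$, $L(\gamma)=n$, $e_0(\gamma)=\gamma(0)$, $e_1(\gamma)=\gamma(n)$. For finitely supported probability distributions $f_0,f_1$: $\Pi_1(f_0,f_1)$ = couplings minimizing $\sum d(x,y)\pi(x,y)$ (minimum $W_1$), $\mathcal{C}(f_0,f_1)=\{(x,y):\pi(x,y)>0$ for some $\pi\in\Pi_1\}$; $W_1$-orientation: adjacent $x,y$ get $x\to y$ iff some geodesic $\gamma$ with $(e_0(\gamma),e_1(\gamma))\in\mathcal{C}(f_0,f_1)$ has $\gamma(k)=x,\gamma(k+1)=y$. Oriented paths: $\gamma(i)\to\gamma(i+1)$; $\gamma_i=\gamma(i)$. $E(G)=\{(xy):x\to y\}$, $T(G)$ triples $x_0\to x_1\to x_2$, $\mathcal{F}(x)=\{y:x\to y\}$, $\mathcal{E}(x)=\{y:y\to x\}$; $\nabla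 g(x_1)=\sum_{\mathcal{F}(x_1)}g(x_1x_2)-\sum_{\mathcal{E}(x_1)}g(x_0x_1)$, $\nabla h(x_1x_2)=\sum_{x_3\in\mathcal{F}(x_2)}h(x_1x_2x_3)-\sum_{x_0\in\mathcal{E}(x_1)}h(x_0x_1x_2)$. $W_{1,+}$-geodesic: a family $(f_t)_{t\in[0,1]}$ from $f_0$ to $f_1$ with $W_1(f_s,f_t)=|t-s|W_1(f_0,f_1)$ (graph $W_1$-oriented w.r.t. $(f_0,f_1)$), differentiable in $t$, with $g_t$ on $E(G)$, $h_t$ on $T(G)$, $\partial_tf_t=-\nabla g_t$, $\partial_tg_t=-\nabla h_t$, $g_t>0$, $f_t(x_1)h_t(x_0x_1x_2)=g_t(x_0x_1)g_t(x_1x_2)$. $C_\gamma(t)=f_t(\gamma_0)$ if $L(\gamma)=0$, $g_t(\gamma_0\gamma_1)$ if $L(\gamma)=1$, $\prod_{i=0}^{n-1}g_t(\gamma_i\gamma_{i+1})/\prod_{j=1}^{n-1}f_t(\gamma_j)$ if $n\ge2$. $\mathcal{A}=\{x:\mathcal{E}(x)=\emptyset\}$, $\mathcal{B}=\{x:\mathcal{F}(x)=\emptyset\}$; extremal oriented paths start in $\mathcal{A}$ and end in $\mathcal{B}$; $\mathrm{SE}\Gamma_{1,x}$: oriented paths from a vertex of $\mathcal{A}$ to $x$; $\mathrm{SE}\Gamma_{2,x}$: oriented paths from $x$ to a vertex of $\mathcal{B}$. *)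

(* Defs.v *)
From HB Require Import structures.
From mathcomp Require Import all_boot all_order all_algebra.
From mathcomp Require Import boolp classical_sets reals topology normedtype.
Set Implicit Arguments. Unset Strict Implicit. Unset Printing Implicit Defensive.
Import Order.TTheory GRing.Theory Num.Theory.
Import numFieldTopology.Exports numFieldNormedType.Exports.
Local Open Scope classical_set_scope.
Local Open Scope ring_scope.

Section W1Geodesics.
Variables (R : realType) (V : eqType) (nbrs : V -> seq V).

Definition adjb (a b : V) : bool := b \in nbrs a.

Definition lf_graph : Prop :=
  (forall x, uniq (nbrs x)) /\
  (forall x y, y \in nbrs x -> x \in nbrs y) /\
  (forall x, x \notin nbrs x) /\
  (forall x y, exists p : seq V, path adjb x p /\ last x p = y).

Definition walkn (x y : V) (n : nat) : Prop :=
  exists p : seq V, size p = n /\ path adjb x p /\ last x p = y.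

(* graph distance: least length of a walk (0 if none; unused for connected graphs) *)
Definition dist (x y : V) : nat :=
  match pselect (exists n, (fun m => `[< walkn x y m >]) n) with
  | left H => @ex_minn (fun m => `[< walkn x y m >]) H
  | right _ => 0%N
  end.

Definition geod (γ : seq V) : Prop :=
  match γ with
  | [::] => False
  | x0 :: p => path adjb x0 p /\ size p = dist x0 (last x0 p)
  end.

Definition fprob (f : V -> R) : Prop :=
  (forall x, 0 <= f x) /\
  exists s : seq V, uniq s /\ (forall x, x \notin s -> f x = 0) /\ \sum_(x <- s) f x = 1.

Definition coupling_on (f0 f1 : V -> R) (S : seq (V * V)) (pi : V * V -> R) : Prop :=
  uniq S /\ (forall p, 0 <= pi p) /\ (forall p, p \notin S -> pi p = 0) /\
  (forall x, \sum_(p <- S | p.1 == x) pi p = f0 x) /\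
  (forall y, \sum_(p <- S | p.2 == y) pi p = f1 y).

Definition cost (S : seq (V * V)) (pi : V * V -> R) : R :=
  \sum_(p <- S) (dist p.1 p.2)%:R * pi p.

Definition W1 (f0 f1 : V -> R) : R :=
  inf [set c | exists S pi, coupling_on f0 f1 S pi /\ c = cost S pi].

Definition optimal (f0 f1 : V -> R) (pi : V * V -> R) : Prop :=
  exists S, coupling_on f0 f1 S pi /\ cost S pi = W1 f0 f1.

Definition Cset (f0 f1 : V -> R) (x y : V) : Prop :=
  exists pi, optimal f0 f1 pi /\ 0 < pi (x, y).

Definition orient (f0 f1 : V -> R) (x y : V) : Prop :=
  exists γ : seq V, geod γ /\ Cset f0 f1 (head x γ) (last x γ) /\
    exists k, (k.+1 < size γ)%N /\ nth x γ k = x /\ nth x γ k.+1 = y.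

Definition nabla_v (O : V -> V -> Prop) (g : V -> V -> R) (x1 : V) : R :=
  \sum_(x2 <- nbrs x1 | `[< O x1 x2 >]) g x1 x2
  - \sum_(x0 <- nbrs x1 | `[< O x0 x1 >]) g x0 x1.

Definition nabla_e (O : V -> V -> Prop) (h : V -> V -> V -> R) (x1 x2 : V) : R :=
  \sum_(x3 <- nbrs x2 | `[< O x2 x3 >]) h x1 x2 x3
  - \sum_(x0 <- nbrs x1 | `[< O x0 x1 >]) h x0 x1 x2.

Definition deriv01 (F F' : R -> R) : Prop :=
  forall t, 0 <= t <= 1 ->
    (fun u : R => u^-1 * (F (t + u) - F t)) @ within (fun u : R => 0 <= t + u <= 1) (dnbhs (0 : R))
      --> F' t.

Definition W1plus_geodesic (f : R -> V -> R) (g : R -> V -> V -> R)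
    (h : R -> V -> V -> V -> R) : Prop :=
  let O := orient (f 0) (f 1) in
  (forall t, 0 <= t <= 1 -> fprob (f t)) /\
  (forall s t, 0 <= s <= 1 -> 0 <= t <= 1 ->
     W1 (f s) (f t) = `|t - s| * W1 (f 0) (f 1)) /\
  (forall x, deriv01 (fun t => f t x) (fun t => - nabla_v O (g t) x)) /\
  (forall x y, O x y -> deriv01 (fun t => g t x y) (fun t => - nabla_e O (h t) x y)) /\
  (forall t x y, 0 <= t <= 1 -> O x y -> 0 < g t x y) /\
  (forall t x0 x1 x2, 0 <= t <= 1 -> O x0 x1 -> O x1 x2 ->
     f t x1 * h t x0 x1 x2 = g t x0 x1 * g t x1 x2).

Definition Cpath (ft : V -> R) (gt : V -> V -> R) (γ : seq V) : R :=
  match γ with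
  | [::] => 0
  | x0 :: p =>
    if p is [::] then ft x0 else
      (\prod_(0 <= i < size p) gt (nth x0 γ i) (nth x0 γ i.+1))
      / (\prod_(1 <= j < size p) ft (nth x0 γ j))
  end.

Definition opath (O : V -> V -> Prop) (γ : seq V) : Prop :=
  match γ with
  | [::] => False
  | x0 :: _ => forall i, (i.+1 < size γ)%N -> O (nth x0 γ i) (nth x0 γ i.+1)
  end.

(* SE Gamma_{1,x}: oriented paths from a vertex of A to x *)
Definition SEG1 (O : V -> V -> Prop) (x : V) (γ : seq V) : Prop :=
  opath O γ /\ (forall y, ~ O y (head x γ)) /\ last x γ = x.

(* SE Gamma_{2,x}: oriented paths from x to a vertex of B *)
Definition SEG2 (O : V -> V -> Prop) (x : V) (γ : seq V) : Prop :=
  opath O γ /\ head x γ = x /\ (forall y, ~ O (last x γ) y).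

(* concatenation gamma U gamma' (gamma ends where gamma' starts) *)
Definition pcat (γ γ' : seq V) : seq V := γ ++ behead γ'.

End W1Geodesics.

(* Main.v *)
Require Import Defs.
From HB Require Import structures.
From mathcomp Require Import all_boot all_order all_algebra.
From mathcomp Require Import boolp classical_sets reals topology normedtype derive realfun.
From mathcomp Require Import ring lra.
Import Order.TTheory GRing.Theory Num.Theory.
Import numFieldTopology.Exports numFieldNormedType.Exports.
Set Implicit Arguments. Unset Strict Implicit.
Local Open Scope classical_set_scope.
Local Open Scope ring_scope.

Section An.
Variable R : realType.
Definition Ft (t : R) := within (fun u : R => 0 <= t + u <= 1) (dnbhs (0 : R)).
Definition HasD (F : R -> R) (t d : R) :=
  (fun u : R => u^-1 * (F (t + u) - F t)) @ Ft t --> d.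

Lemma Ft_id t : (fun u => u) @ Ft t --> (0:R).
Proof.
apply: cvg_trans (cvg_within _) _. apply: cvg_trans (cvg_within _) _. exact: cvg_id.
Qed.

Lemma Ft_neq0 t : \forall u \near Ft t, u != 0.
Proof.
rewrite near_withinE. rewrite /dnbhs near_withinE. near=> u => ? /eqP ; done.
Unshelve. all: by end_near. Qed.

Lemma HasD_cont F t d : HasD F t d -> (fun u => F (t + u)) @ Ft t --> F t.
Proof.
move=> hd.
have h1 : (fun u => F t + u * (u^-1 * (F (t + u) - F t))) @ Ft t --> F t + 0 * d.
  apply: cvgD; first exact: cvg_cst.
  by apply: cvgM; [exact: Ft_id | exact: hd].
rewrite mul0r addr0 in h1.
apply: cvg_trans h1; apply: near_eq_cvg.
near=> u. have u0 : u != 0 by near: u; exact: Ft_neq0.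
by rewrite mulrA mulfV // mul1r addrC subrK.
Unshelve. all: by end_near. Qed.

Lemma HasD_cst c t : HasD (fun _ => c) t 0.
Proof.
rewrite /HasD.
have -> : (fun u : R => u^-1 * (c - c)) = fun _ => 0 by apply/funext=> u; rewrite subrr mulr0.
exact: cvg_cst.
Qed.

Lemma HasDM F G t a b : HasD F t a -> HasD G t b ->
  HasD (fun s => F s * G s) t (F t * b + G t * a).
Proof.
move=> ha hb.
have h1 : (fun u => F (t + u) * (u^-1 * (G (t + u) - G t)) + G t * (u^-1 * (F (t + u) - F t))) @ Ft t --> F t * b + G t * a.
  apply: cvgD.
    by apply: cvgM; [exact: HasD_cont ha| exact: hb].
  by apply: cvgM; [exact: cvg_cst| exact: ha].
apply: cvg_trans h1; apply: near_eq_cvg. near=> u. ring.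
Unshelve. all: by end_near. Qed.

Lemma HasDV G t b : G t != 0 -> HasD G t b ->
  HasD (fun s => (G s)^-1) t (- b / (G t)^+2).
Proof.
move=> g0 hb.
have hc := HasD_cont hb.
have h1 : (fun u => - (u^-1 * (G (t + u) - G t)) * ((G (t+u))^-1 * (G t)^-1)) @ Ft t --> - b * ((G t)^-1 * (G t)^-1).
  apply: cvgM; first exact: cvgN.
  apply: cvgM; last exact: cvg_cst.
  exact: cvgV.
rewrite -expr2 exprVn in h1.
apply: cvg_trans h1; apply: near_eq_cvg.
have : \forall u \near Ft t, G (t + u) != 0.
  have /cvgrPdist_lt /(_ `|G t|) : (fun u => G (t + u)) @ Ft t --> G t by [].
  rewrite normr_gt0 => /(_ g0). apply: filterS => u hu.
  apply/eqP => e; move: hu; rewrite e subr0 ltxx //.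
move=> hG.
near=> u.
have gu : G (t+u) != 0.
  near: u. exact: hG.
set a := G (t + u) in gu *. set c := G t in g0 *.
rewrite mulNr -mulrN -mulrA; congr (_ * _).
by rewrite mulrN mulrBl mulrA mulfV // mul1r mulrCA mulfV // mulr1 opprB.
Unshelve. all: by end_near. Qed.


Lemma nearD t : 0 < t < 1 -> \forall u \near (0:R), 0 <= t + u <= 1.
Proof.
move=> /andP[t0 t1].
apply/nbhs_ballP; exists (Num.min t (1 - t)) => /=.
  by rewrite lt_min t0 subr_gt0 t1.
move=> u; rewrite -ball_normE /= sub0r normrN lt_min => /andP[h1 h2].
move/ltr_normlP: h1 => [h1 h1']; move/ltr_normlP: h2 => [h2 h2'].
apply/andP; split; lra.
Qed.

Lemma HasD_is_derive F t d : 0 < t < 1 -> HasD F t d -> is_derive t 1 F d.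
Proof.
move=> t01 hd.
have E : (fun h : R => h^-1 *: ((F \o shift t) (h *: 1) - F t)) = (fun u => u^-1 * (F (t + u) - F t)).
  by apply/funext => u; rewrite /= /shift [_%:A]mulr1 (addrC u t).
have hc : (fun h : R => h^-1 *: ((F \o shift t) (h *: 1) - F t)) @ 0^' --> d.
  rewrite E. apply: cvg_trans hd. apply: cvg_app.
  move=> P. rewrite /Ft /= => hP.
  have hD := nearD t01.
  have hD' : \forall u \near 0^', 0 <= t + u <= 1 by apply: cvg_within.
  move: hP; rewrite nbhs_simpl /within /= => hP.
  apply: filterS2 hD' hP => v hv hvD. exact: hvD.
apply: DeriveDef; first by apply/cvg_ex; exists d.
by rewrite /derive; apply: cvg_lim.
Unshelve. all: by end_near. Qed.


Lemma HasD_right F t d : 0 <= t < 1 -> HasD F t d -> F @ t^'+ --> F t.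
Proof.
move=> /andP[t0 t1] hd.
have hc := HasD_cont hd.
have sub : (fun s => s - t) @ t^'+ `=>` Ft t.
  move=> P. rewrite /Ft /within /dnbhs /within /= => hP.
  move/nbhs_ballP: hP => [e e0 he].
  rewrite /at_right /within /=.
  apply/nbhs_ballP; exists (Num.min e (1 - t)) => /=.
    by rewrite lt_min e0 subr_gt0 t1.
  move=> s; rewrite -ball_normE /= lt_min => /andP[h1 h2] ts.
  apply: he.
  - by rewrite -ball_normE /= sub0r normrN distrC.
  - by rewrite subr_eq0 gt_eqF.
  - move/ltr_normlP: h2 => [h2 h2']. apply/andP; split; lra.
have := cvg_comp _ _ sub hc.
have -> : ((fun u => F (t + u)) \o (fun s => s - t)) = F.
  by apply/funext => s /=; rewrite addrCA subrr addr0.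
by [].
Qed.

Lemma HasD_left F t d : 0 < t <= 1 -> HasD F t d -> F @ t^'- --> F t.
Proof.
move=> /andP[t0 t1] hd.
have hc := HasD_cont hd.
have sub : (fun s => s - t) @ t^'- `=>` Ft t.
  move=> P. rewrite /Ft /within /dnbhs /within /= => hP.
  move/nbhs_ballP: hP => [e e0 he].
  rewrite /at_left /within /=.
  apply/nbhs_ballP; exists (Num.min e t) => /=.
    by rewrite lt_min e0 t0.
  move=> s; rewrite -ball_normE /= lt_min => /andP[h1 h2] ts.
  apply: he.
  - by rewrite -ball_normE /= sub0r normrN distrC.
  - by rewrite subr_eq0 lt_eqF.
  - move/ltr_normlP: h2 => [h2 h2']. apply/andP; split; lra.
have := cvg_comp _ _ sub hc.
have -> : ((fun u => F (t + u)) \o (fun s => s - t)) = F.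
  by apply/funext => s /=; rewrite addrCA subrr addr0.
by [].
Qed.


Lemma HasD0_const F : (forall t, 0 <= t <= 1 -> HasD F t 0) ->
  forall t, 0 <= t <= 1 -> F t = F 0.
Proof.
move=> hF t /andP[t0 t1].
move: t0; rewrite le_eqVlt => /predU1P[<-//|tpos].
have hin : forall x, x \in `]0, t[ -> is_derive x 1 F 0.
  move=> x; rewrite in_itv /= => /andP[x0 xt].
  apply: HasD_is_derive; first by rewrite x0 /= (lt_le_trans xt t1).
  by apply: hF; rewrite ltW //= ltW // (lt_le_trans xt t1).
have hcont : {within `[0, t], continuous F}.
  apply/(continuous_within_itvP _ tpos); split.
  - move=> x hx; apply/differentiable_continuous/derivable1_diffP.
    by case: (hin x hx).
  - apply: (@HasD_right F 0 0); first by rewrite lexx ltr01.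
    by apply: hF; rewrite lexx ler01.
  - apply: (@HasD_left F t 0); first by rewrite tpos t1.
    by apply: hF; rewrite ltW.
have [c _] := MVT_segment (ltW tpos) hin hcont.
by rewrite mul0r => /eqP; rewrite subr_eq0 => /eqP.
Qed.

End An.
Section Comb.
Variables (R : realType) (V : eqType).
Variable O : V -> V -> Prop.

Fixpoint Q (ft : V -> R) (gt : V -> V -> R) (b : V) (s : seq V) : R :=
  match s with [::] => 1 | c :: s' => gt b c / ft b * Q ft gt c s' end.

Definition Cr (ft : V -> R) (gt : V -> V -> R) (l : seq V) : R :=
  match l with
  | [::] => 0
  | a :: s => match s with [::] => ft a | b :: s' => gt a b * Q ft gt b s' end
  end.

Fixpoint opr (a : V) (s : seq V) : Prop :=
  match s with [::] => True | b :: s' => O a b /\ opr b s' end.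

Lemma QE ft gt d b s : Q ft gt b s =
  (\prod_(0 <= i < size s) gt (nth d (b :: s) i) (nth d (b :: s) i.+1)) /
  (\prod_(0 <= j < size s) ft (nth d (b :: s) j)).
Proof.
elim: s b => [|c s IH] b /=; first by rewrite !big_geq // invr1 mulr1.
rewrite !big_nat_recl // IH /= invfM. ring.
Qed.

Lemma Cpath_Cr ft gt l : Cpath ft gt l = Cr ft gt l.
Proof.
case: l => [|a [|b s]] //=.
rewrite big_nat_recl // big_add1 /= (QE _ _ a). ring.
Qed.

Lemma Q_cat ft gt b s1 s2 : Q ft gt b (s1 ++ s2) = Q ft gt b s1 * Q ft gt (last b s1) s2.
Proof. elim: s1 b => [|c s IH] b /=; first by rewrite mul1r. by rewrite IH mulrA. Qed.

Lemma opr_cat a s1 s2 : opr a s1 -> opr (last a s1) s2 -> opr a (s1 ++ s2).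
Proof. elim: s1 a => [|b s IH] a //= [h1 h2] h3; split => //; exact: IH. Qed.

Lemma opr_pred a s : opr a s -> s != [::] -> exists p, O p (last a s).
Proof.
elim: s a => [|b s IH] a //= [h1 h2] _.
case: s IH h2 => [|c s] IH h2; first by exists a.
by apply: IH.
Qed.

Lemma opath_opr a s : opath O (a :: s) -> opr a s.
Proof.
elim: s a => [|b s IH] a //= H; split; first by apply: (H 0%N).
apply: IH => i hi /=.
have := H i.+1 hi => /=.
have l1 : (i < size (b :: s))%N by apply: ltnW.
have l2 : (i < size s)%N by [].
by rewrite (set_nth_default a b l1) (set_nth_default a b l2).
Qed.

End Comb.

Section Main.
Variables (R : realType) (V : eqType) (nbrs : V -> seq V).
Variables (f : R -> V -> R) (g : R -> V -> V -> R) (h : R -> V -> V -> V -> R).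
Variable O : V -> V -> Prop.
Hypothesis hf : forall x, deriv01 (fun t => f t x) (fun t => - nabla_v nbrs O (g t) x).
Hypothesis hg : forall x y, O x y -> deriv01 (fun t => g t x y) (fun t => - nabla_e nbrs O (h t) x y).
Hypothesis gpos : forall t x y, 0 <= t <= 1 -> O x y -> 0 < g t x y.
Hypothesis hfh : forall t x0 x1 x2, 0 <= t <= 1 -> O x0 x1 -> O x1 x2 ->
     f t x1 * h t x0 x1 x2 = g t x0 x1 * g t x1 x2.

Definition out t b := \sum_(x2 <- nbrs b | `[< O b x2 >]) g t b x2.
Definition inn t b := \sum_(x0 <- nbrs b | `[< O x0 b >]) g t x0 b.
Definition phi t b := out t b / f t b.

Lemma fne0 t a b c : 0 <= t <= 1 -> O a b -> O b c -> f t b != 0.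
Proof.
move=> t01 ab bc; apply/eqP => e.
have := hfh t01 ab bc; rewrite e mul0r => /esym/eqP.
by rewrite mulf_eq0 !gt_eqF ?gpos.
Qed.

Lemma hE t a b c : 0 <= t <= 1 -> O a b -> O b c -> h t a b c = g t a b * g t b c / f t b.
Proof.
move=> t01 ab bc; rewrite -(hfh t01 ab bc) (mulrC (f t b)) mulfK //; exact: fne0 ab bc.
Qed.

Lemma nabla_eE t a b : 0 <= t <= 1 -> O a b ->
  nabla_e nbrs O (h t) a b = g t a b * phi t b - g t a b * inn t a / f t a.
Proof.
move=> t01 ab.
have s1 : \sum_(x3 <- nbrs b | `[< O b x3 >]) h t a b x3 = g t a b / f t b * out t b.
  rewrite /out big_distrr /=; apply: eq_bigr => i /asboolP bi.
  by rewrite hE // mulrAC.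
have s2 : \sum_(x0 <- nbrs a | `[< O x0 a >]) h t x0 a b = g t a b / f t a * inn t a.
  rewrite /inn big_distrr /=; apply: eq_bigr => i /asboolP ia.
  rewrite hE //; ring.
rewrite /nabla_e s1 s2 /phi. ring.
Qed.

Lemma Df t y : 0 <= t <= 1 -> HasD (fun s => f s y) t (- (out t y - inn t y)).
Proof. move=> t01; exact: (@hf y t t01). Qed.

Lemma Dg t a b : 0 <= t <= 1 -> O a b ->
  HasD (fun s => g s a b) t (- (g t a b * phi t b - g t a b * inn t a / f t a)).
Proof. by move=> t01 ab; rewrite -nabla_eE //; exact: (hg ab t01). Qed.

Lemma HasD_eqv (F : R -> R) (t d1 d2 : R) : HasD F t d1 -> d1 = d2 -> HasD F t d2.
Proof. by move=> H <-. Qed.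

Lemma DQ t s : 0 <= t <= 1 -> forall a b, O a b -> opr O b s ->
  HasD (fun u => Q (f u) (g u) b s) t (Q (f t) (g t) b s * (phi t b - phi t (last b s))).
Proof.
move=> t01; elim: s => [|c s IH] a b ab /=.
  by move=> _; rewrite subrr mulr0; apply: HasD_cst.
move=> [bc hs].
have fb := fne0 t01 ab bc.
have H := HasDM (HasDM (@Dg t b c t01 bc) (HasDV fb (@Df t b t01))) (@IH b c bc hs).
apply: (HasD_eqv H).
set pc := phi t c; set pL := phi t (last c s).
rewrite /phi. field. exact: fb.
Qed.


Lemma out0 t b : (forall y, ~ O b y) -> out t b = 0.
Proof. by move=> H; rewrite /out big1 // => i /asboolP /H. Qed.

Lemma inn0 t a : (forall y, ~ O y a) -> inn t a = 0.
Proof. by move=> H; rewrite /inn big1 // => i /asboolP /H. Qed.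

Lemma CrD t a s : 0 <= t <= 1 -> (forall y, ~ O y a) -> opr O a s ->
  (forall y, ~ O (last a s) y) -> HasD (fun u => Cr (f u) (g u) (a :: s)) t 0.
Proof.
move=> t01 noin; case: s => [|b s] /= hs noout.
  apply: (HasD_eqv (@Df t a t01)).
  by rewrite (out0 t noout) (inn0 t noin) subrr oppr0.
case: hs => ab hs.
have H := HasDM (@Dg t a b t01 ab) (@DQ t s t01 a b ab hs).
apply: (HasD_eqv H).
set pb := phi t b.
rewrite (inn0 t noin) /phi (out0 t noout) mul0r. ring.
Qed.

Lemma QNZ t a b s : 0 <= t <= 1 -> O a b -> opr O b s -> Q (f t) (g t) b s != 0.
Proof.
move=> t01; elim: s a b => [|c s IH] a b ab /=; first by move=> _; rewrite oner_neq0.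
move=> [bc hs].
rewrite !mulf_neq0 ?invr_eq0 ?(gt_eqF (gpos t01 bc)) //; first exact: fne0 ab bc.
exact: IH bc hs.
Qed.

Lemma main_aux x a s1 s2 t : 0 <= t <= 1 -> (forall y, ~ O y a) -> opr O a s1 ->
  last a s1 = x -> opr O x s2 -> (forall y, ~ O (last x s2) y) ->
  Cr (f t) (g t) (a :: s1 ++ s2) = Cr (f 0) (g 0) (a :: s1 ++ s2) /\
  f t x = Cr (f t) (g t) (a :: s1) * Cr (f t) (g t) (x :: s2) / Cr (f t) (g t) (a :: s1 ++ s2).
Proof.
move=> t01 noin o1 lx o2 nout; split.
  apply: (@HasD0_const R (fun u => Cr (f u) (g u) (a :: s1 ++ s2))) => // u u01.
  apply: CrD => //; first by apply: opr_cat => //; rewrite lx.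
  by rewrite last_cat lx.
case: s1 o1 lx => [|b1 s1'] o1 lx /=.
  move: lx => /= <-{x} in o2 nout *.
  case: s2 o2 nout => [|c s2'] /= o2 nout.
    by have [->|nz] := eqVneq (f t a) 0; [rewrite !mul0r | rewrite mulfK].
  case: o2 => ac hs.
  by rewrite mulfK // mulf_neq0 ?(gt_eqF (gpos t01 ac)) //; exact: QNZ ac hs.
case: o1 => ab1 hs1.
rewrite /= in lx.
have QA : g t a b1 * Q (f t) (g t) b1 s1' != 0.
  by rewrite mulf_neq0 ?(gt_eqF (gpos t01 ab1)) //; exact: QNZ ab1 hs1.
case: s2 o2 nout => [|c s2'] /= o2 nout.
  by rewrite cats0 mulrAC divff // mul1r.
case: o2 => xc hs2.
have [p px] : exists p, O p x.
  have := @opr_pred _ O a (b1 :: s1') (conj ab1 hs1) isT.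
  by rewrite /= lx.
have fx := fne0 t01 px xc.
have Q1 := QNZ t01 ab1 hs1.
have Q2 := QNZ t01 xc hs2.
have gab := gt_eqF (gpos t01 ab1).
have gxc := gt_eqF (gpos t01 xc).
rewrite Q_cat lx /=.
field. by rewrite gab gxc fx Q1 Q2.
Qed.

End Main.

Theorem proposition3p9 (R : realType) (V : eqType) (nbrs : V -> seq V)
    (HG : lf_graph nbrs)
    (f : R -> V -> R) (g : R -> V -> V -> R) (h : R -> V -> V -> V -> R)
    (Hgeo : W1plus_geodesic nbrs f g h)
    (x : V) (γ γ' : seq V)
    (H1 : SEG1 (orient nbrs (f 0) (f 1)) x γ)
    (H2 : SEG2 (orient nbrs (f 0) (f 1)) x γ') :
  forall t : R, 0 <= t <= 1 ->
    Cpath (f t) (g t) (pcat γ γ') = Cpath (f 0) (g 0) (pcat γ γ') /\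
    f t x = Cpath (f t) (g t) γ * Cpath (f t) (g t) γ' / Cpath (f t) (g t) (pcat γ γ').
Proof.
move=> t t01.
move: Hgeo; rewrite /W1plus_geodesic /= => -[_ [_ [hf [hg [gpos hfh]]]]].
case: γ H1 => [|a s1] [op1 [noin lx]]; first by [].
rewrite /= in noin lx.
case: γ' H2 => [|x' s2] [op2 [hx nout]]; first by [].
rewrite /= in hx nout.
subst x'.
rewrite /pcat !Cpath_Cr [behead _]/= cat_cons.
apply: (main_aux hf hg gpos hfh t01 noin (opath_opr op1) lx (opath_opr op2) nout).
Qed.
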